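(* Let $G=(V,E)$ be a hypergraph and let $(U,\overline U)$ be a minimal balanced minimum $k$-partition split in $G$ for some integer $k\ge2$. Then for every vertex $u_0\in U$ there exist subsets $S\subseteq U\setminus\{u_0\}$ and $T\subseteq\overline U$ with $|S|\le 2k-3$ and $|T|\le 2k-2$ such that $(U,\overline U)$ is the source minimal minimum $(S\cup\{u_0\},T)$-terminal cut in $G$.
   Context: A hypergraph $G=(V,E)$ has finite vertex set $V$ and finite multiset $E$ of unit-cost hyperedges (subsets of $V$). For $X\subseteq V$, $\overline X=V\setminus X$ and $d(X)$ is the number of hyperedges meeting both $X$ and $\overline X$. The cost of an (ordered) partition of $V$ into non-empty parts is the number of hyperedges meeting at least two parts; a minimum $k$-partition is a $k$-partition of minimum cost. A 2-partition $(U,\overline U)$ is a balanced minimum $k$-partition split if there is a minimum $k$-partition $(V_1,\dots,V_k)$ with $U=\bigcup_{i=1}^{\lfloor k/2\rfloor}V_i$; it is minimal if there is no balanced minimum $k$-partition split $(U',\overline{U'})$ with $U'\subsetneq U$. For disjoint $S,T\subseteq V$, a 2-partition $(X,\overline X)$ is an $(S,T)$-terminal cut if $S\subseteq X\subseteq V\setminus T$; it is minimum if $d(X)$ is minimum among such cuts; the source minimal minimum $(S,T)$-terminal cut is the unique minimum one whose source set $X$ is inclusion-wise minimal. *)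

(* Defs.v *)
From mathcomp Require Import all_boot.
Set Implicit Arguments. Unset Strict Implicit. Unset Printing Implicit Defensive.

(* A hypergraph on a finite vertex type V is a multiset of hyperedges,
   represented as a list E : seq {set V}; every hyperedge has unit cost. *)

Section Hyper.
Variable V : finType.
Variable E : seq {set V}.

Definition dcut (X : {set V}) : nat :=
  count (fun e : {set V} => (e :&: X != set0) && (e :&: ~: X != set0)) E.

Definition is_kpartition (k : nat) (P : 'I_k -> {set V}) : Prop :=
  (forall i, P i != set0) /\
  (forall i j, i != j -> [disjoint P i & P j]) /\
  (\bigcup_(i < k) P i = [set: V]).

Definition kcost (k : nat) (P : 'I_k -> {set V}) : nat :=
  count (fun e : {set V} => 2 <= #|[set i : 'I_k | e :&: P i != set0]|) E.

Definition is_min_kpartition (k : nat) (P : 'I_k -> {set V}) : Prop :=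
  is_kpartition P /\ forall Q : 'I_k -> {set V}, is_kpartition Q -> kcost P <= kcost Q.

Definition balanced_split (k : nat) (U : {set V}) : Prop :=
  exists P : 'I_k -> {set V},
    is_min_kpartition P /\ U = \bigcup_(i < k | i < k./2) P i.

Definition minimal_balanced_split (k : nat) (U : {set V}) : Prop :=
  balanced_split k U /\ ~ (exists U' : {set V}, balanced_split k U' /\ U' \proper U).

Definition terminal_cut (S T X : {set V}) : Prop :=
  X != set0 /\ X != [set: V] /\ S \subset X /\ X \subset ~: T.

Definition min_terminal_cut (S T X : {set V}) : Prop :=
  terminal_cut S T X /\ forall Y, terminal_cut S T Y -> dcut X <= dcut Y.

Definition source_minimal_min_terminal_cut (S T X : {set V}) : Prop :=
  min_terminal_cut S T X /\
  forall Y, min_terminal_cut S T Y -> ~ (Y \proper X).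

End Hyper.

(* Main.v *)
Require Import Defs.
From mathcomp Require Import all_boot.
From mathcomp Require Import zify.
Set Implicit Arguments. Unset Strict Implicit. Unset Printing Implicit Defensive.

Lemma count_sum (T : Type) (p : pred T) (s : seq T) : count p s = \sum_(x <- s) p x.
Proof. by rewrite -sum1_count big_mkcond; apply: eq_bigr => x _; case: (p x). Qed.

Lemma sum_card (r : nat) (p : pred 'I_r) : \sum_(i < r) p i = #|[set i : 'I_r | p i]|.
Proof.
rewrite -sum1_card [RHS]big_mkcond /=; apply: eq_bigr => i _; rewrite inE; by case: (p i).
Qed.

Lemma sum_window_aux a m M n :
  \sum_(a <= t < n) ((m < t) && (t <= M)) <= minn n M.+1 - m.+1.
Proof.
elim: n => [|n IH]; first by rewrite big_geq.
case: (leqP a n) => an; last by rewrite big_geq.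
rewrite big_nat_recr //=; move: IH.
case H: ((m < n) && (n <= M)) => /= IH.
  move/andP: H => [H1 H2]; lia.
lia.
Qed.

Lemma sum_window a n m M : \sum_(a <= t < n) ((m < t) && (t <= M)) <= M - m.
Proof. apply: (leq_trans (sum_window_aux a m M n)); lia. Qed.

Lemma leq_sum_range a n (f g : nat -> nat) :
  (forall t, a <= t < n -> f t <= g t) -> \sum_(a <= t < n) f t <= \sum_(a <= t < n) g t.
Proof.
move=> H; rewrite big_nat_cond [X in _ <= X]big_nat_cond.
by apply: leq_sum => t /andP[/H].
Qed.

Lemma ex_min (T : finType) (X : {set T}) (f : T -> nat) :
  X != set0 -> exists2 v, v \in X & forall w, w \in X -> f v <= f w.
Proof.
case/set0Pn => v0 Hv0.
case: (@arg_minnP _ v0 (fun v => v \in X) f Hv0) => v Hv Hmin.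
by exists v.
Qed.

Lemma ex_max (T : finType) (X : {set T}) (f : T -> nat) :
  X != set0 -> exists2 v, v \in X & forall w, w \in X -> f w <= f v.
Proof.
case/set0Pn => v0 Hv0.
case: (@arg_maxnP _ v0 (fun v => v \in X) f Hv0) => v Hv Hmax.
by exists v.
Qed.
Section Cut.
Variable V : finType.
Implicit Types (e X Y Z : {set V}).

Definition meets e X := e :&: X != set0.
Definition cr e X := meets e X && meets e (~: X).

Lemma meetsP e X : reflect (exists2 v, v \in e & v \in X) (meets e X).
Proof.
rewrite /meets; apply: (iffP (set0Pn _)).
- by move=> [v]; rewrite inE => /andP[]; exists v.
- by move=> [v ve vX]; exists v; rewrite inE ve vX.
Qed.

Lemma meetsU e X Y : meets e (X :|: Y) = meets e X || meets e Y.
Proof. by rewrite /meets setIUr -negb_and setU_eq0. Qed.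

Lemma meetsD e X Y : meets e X = meets e (X :&: Y) || meets e (X :&: ~: Y).
Proof. by rewrite -meetsU -setIUr setUCr setIT. Qed.

Lemma meets_sub e X Y : X \subset Y -> meets e X -> meets e Y.
Proof. move=> sXY /meetsP[v ve vX]; apply/meetsP; exists v => //; exact: (subsetP sXY). Qed.

Lemma crC e X : cr e (~: X) = cr e X.
Proof. by rewrite /cr setCK andbC. Qed.

Lemma cr_sub e X Y : cr e (X :&: Y) + cr e (X :|: Y) <= cr e X + cr e Y.
Proof.
rewrite /cr.
set a1 := meets e (X :&: Y); set a2 := meets e (X :&: ~: Y).
set a3 := meets e (~: X :&: Y); set a4 := meets e (~: X :&: ~: Y).
have hX : meets e X = a1 || a2 by exact: meetsD.
have hCX : meets e (~: X) = a3 || a4 by exact: meetsD.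
have hY : meets e Y = a1 || a3 by rewrite (meetsD e Y X) setIC [Y :&: ~: X]setIC.
have hCY : meets e (~: Y) = a2 || a4 by rewrite (meetsD e (~: Y) X) setIC [~: Y :&: ~: X]setIC.
have hCI : meets e (~: (X :&: Y)) = (a3 || a4) || (a2 || a4) by rewrite setCI meetsU hCX hCY.
have hU : meets e (X :|: Y) = (a1 || a2) || (a1 || a3) by rewrite meetsU hX hY.
have hCU : meets e (~: (X :|: Y)) = a4 by rewrite setCU.
rewrite hX hCX hY hCY hCI hU hCU -/a1.
clear hX hCX hY hCY hCI hU hCU; clearbody a1 a2 a3 a4.
by case: a1; case: a2; case: a3; case: a4.
Qed.

End Cut.

Lemma leb_nat (b c : bool) : (b -> c) -> b <= c.
Proof. by case: b; case: c => // /(_ isT). Qed.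

Lemma card_setU_le (T : finType) (X Y : {set T}) : #|X :|: Y| <= #|X| + #|Y|.
Proof. rewrite cardsU; lia. Qed.

Section PE.
Variable V : finType.
Variables (A : {set V}) (r : nat) (D : nat -> {set V}).
Hypothesis DA : forall i, i < r -> D i \subset A.

Definition Bp n := D n :\: \bigcup_(l < r | (l : nat) != n) D l.
Definition ply v := #|[set i : 'I_r | v \in D i]|.
Definition Lv t := [set v | t <= ply v].

Lemma Bp_sub n : Bp n \subset D n.
Proof. exact: subsetDl. Qed.

Lemma Bp_notin n l v : l < r -> l != n -> v \in Bp n -> v \notin D l.
Proof.
move=> lr ln; rewrite inE => /andP[vU _]; apply: contra vU => vl.
by apply/bigcupP; exists (Ordinal lr).
Qed.

Lemma ply_Bp n v : n < r -> v \in Bp n -> ply v = 1.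
Proof.
move=> nr vB; rewrite /ply (_ : [set i : 'I_r | v \in D i] = [set Ordinal nr]) ?cards1 //.
apply/setP => i; rewrite !inE; apply/idP/idP => [vi|/eqP->]; last exact: (subsetP (Bp_sub n)).
apply/eqP/val_inj => /=; apply/eqP; apply: contraLR vi => ni.
by apply: (Bp_notin (ltn_ord i) ni vB).
Qed.

Lemma ply_ge2 n v : n < r -> v \in D n -> v \notin Bp n -> 1 < ply v.
Proof.
move=> nr vD; rewrite inE vD andbT negbK => /bigcupP[l ln vl].
apply/card_gt1P; exists (Ordinal nr), l; rewrite !inE vD vl; split => //.
by apply: contra ln => /eqP <-.
Qed.

Lemma ply_out v : v \notin A -> ply v = 0.
Proof.
move=> vA; apply/eqP; rewrite cards_eq0; apply/eqP/setP => i; rewrite !inE.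
by apply: contraNF vA => /(subsetP (DA (ltn_ord i))).
Qed.

Lemma Bp_A n : n < r -> Bp n \subset A.
Proof. move=> nr; exact: subset_trans (Bp_sub n) (DA nr). Qed.

Lemma Bp_disj n n' v : n < r -> n' < r -> n != n' -> v \in Bp n -> v \notin Bp n'.
Proof.
move=> nr n'r nn' vB; apply: contraL (vB) => vB'.
have := Bp_notin nr nn' vB'; apply: contraNN => _; exact: (subsetP (Bp_sub n)).
Qed.

Lemma PE (e : {set V}) (Xs : nat) : 2 <= r ->
  Xs <= 2 ->
  ((forall i : 'I_r, ~~ meets e (Bp i)) -> Xs = 0) ->
  (forall i0 : 'I_r, (forall i : 'I_r, i != i0 -> ~~ meets e (Bp i)) -> Xs <= 1) ->
  (forall i : 'I_r, e \subset Bp i -> Xs = 0) ->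
  Xs + \sum_(3 <= t < r.+1) cr e (A :\: Lv t) <= \sum_(i < r) cr e (A :\: D i).
Proof.
move=> r2 HX2 HX0 HX1 HX3.
case eA: (meets e A); last first.
  have H0 (X : {set V}) : X \subset A -> ~~ meets e X.
    by move=> XA; apply: contraFN eA; apply: meets_sub.
  rewrite HX0; last by move=> i; apply: H0; apply: Bp_A.
  rewrite add0n big1 // => t _.
  by rewrite /cr (negbTE (H0 _ (subsetDl _ _))).
case eO: (meets e (~: A)).
  have [vs vsin vsmin] := ex_min ply eA.
  set m := ply vs.
  have crt t : cr e (A :\: Lv t) <= (m < t).
    apply: leb_nat => /andP[/meetsP[v ve]]; rewrite !inE -ltnNge => /andP[vt vA] _.
    by apply: leq_ltn_trans vt; apply: vsmin; rewrite inE ve vA.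
  have crD (i : 'I_r) : ~~ (e :&: A \subset D i) -> cr e (A :\: D i).
    case/subsetPn => v; rewrite inE => /andP[ve vA] vD.
    apply/andP; split; first by apply/meetsP; exists v; rewrite // inE vD vA.
    case/meetsP: eO => w we wA; apply/meetsP; exists w => //.
    by move: wA; rewrite !inE negb_and => ->; rewrite orbT.
  set Aset := [set i : 'I_r | e :&: A \subset D i].
  have low : r - #|Aset| <= \sum_(i < r) cr e (A :\: D i).
    have HC := cardsC Aset; rewrite card_ord in HC.
    rewrite sum_card; apply: (@leq_trans #|~: Aset|); first by clear -HC; lia.
    apply: subset_leq_card; apply/subsetP => i; rewrite !inE; exact: crD.
  have Am : #|Aset| <= m.
    apply: subset_leq_card; apply/subsetP => i; rewrite !inE => /subsetP; apply.
    exact: vsin.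
  case: (leqP 2 m) => m2.
    rewrite HX0 ?add0n; last first.
      move=> i; apply/meetsP => [[v ve vB]].
      have := vsmin v; rewrite inE ve (subsetP (Bp_A (ltn_ord i))) // => /(_ isT).
      rewrite (ply_Bp (ltn_ord i) vB) -/m => H; clear -H m2; lia.
    apply: leq_trans low.
    apply: (leq_trans (leq_sum_range (g := fun t => (m < t) && (t <= r)) _)).
      move=> t /andP[_ tr]; apply: leq_trans (crt t) _.
      have tr' : t <= r by [].
      by rewrite tr' andbT.
    apply: leq_trans (sum_window _ _ _ _) _; clear -Am; lia.
  have St : \sum_(3 <= t < r.+1) cr e (A :\: Lv t) <= r - 2.
    apply: (leq_trans (leq_sum_range (g := fun t => (2 < t) && (t <= r)) _)).
      move=> t /andP[t3 tr]; have tr' : t <= r by [].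
      rewrite t3 tr' /=; exact: leq_b1.
    exact: sum_window.
  case A0: (#|Aset| == 0).
    move/eqP: A0 low => A0 low; clear -A0 low HX2 St r2; lia.
  have /cards1P[i0 Ai0] : #|Aset| == 1 by clear -Am m2 A0; lia.
  have : Xs <= 1.
    apply: (HX1 i0) => i ii0; apply/meetsP => [[v ve vB]].
    have : i0 \in Aset by rewrite Ai0 inE.
    rewrite inE => /subsetP/(_ v); rewrite inE ve (subsetP (Bp_A (ltn_ord i)) _ vB) => /(_ isT).
    by apply/negP; apply: (Bp_notin (ltn_ord i0) _ vB); rewrite eq_sym.
  move: low; rewrite Ai0 cards1 => HX1' low; clear -HX1' low St r2; lia.
have eA' : e \subset A.
  apply/subsetP => v ve; apply: contraFT eO => vA.
  by apply/meetsP; exists v; rewrite // inE.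
have e0 : e != set0.
  by apply: contraTneq eA => ->; rewrite /meets set0I eqxx.
have [vlo vloin vlomin] := ex_min ply e0.
have [vhi vhiin vhimax] := ex_max ply e0.
set m := ply vlo; set M := ply vhi.
have crt t : cr e (A :\: Lv t) <= (m < t) && (t <= M).
  apply: leb_nat => /andP[/meetsP[v ve]]; rewrite !inE -ltnNge => /andP[vt vA].
  case/meetsP => w we; rewrite !inE negb_and negbK (subsetP eA' w we) /= orbF => wt.
  rewrite (leq_ltn_trans (vlomin v ve) vt) /=.
  exact: leq_trans wt (vhimax w we).
have crD (i : 'I_r) : (exists2 v, v \in e & v \notin D i) ->
    (exists2 w, w \in e & w \in D i) -> cr e (A :\: D i).
  move=> [v ve vD] [w we wD]; apply/andP; split.
    by apply/meetsP; exists v; rewrite // inE vD (subsetP eA').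
  by apply/meetsP; exists w; rewrite // !inE wD.
have SumT2 : \sum_(3 <= t < r.+1) cr e (A :\: Lv t) <= M - 2.
  apply: (leq_trans (leq_sum_range (g := fun t => (2 < t) && (t <= M)) _)).
    move=> t /andP[t3 tr]; apply: leq_trans (crt t) _.
    by apply: leb_nat => /andP[_ ->]; rewrite t3.
  exact: sum_window.
have G : \sum_(3 <= t < r.+1) cr e (A :\: Lv t) <= \sum_(i < r) cr e (A :\: D i).
  apply: (leq_trans (leq_sum_range (g := fun t => (m < t) && (t <= M)) _)).
    by move=> t _; apply: crt.
  apply: leq_trans (sum_window _ _ _ _) _.
  rewrite sum_card.
  set X1 := [set i : 'I_r | (vhi \in D i) && (vlo \notin D i)].
  set X2 := [set i : 'I_r | vlo \in D i].
  have h1 : M <= #|X1| + #|X2|.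
    apply: leq_trans (card_setU_le X1 X2); apply: subset_leq_card.
    apply/subsetP => i; rewrite !inE => vi; by case: (vlo \in D i); rewrite ?orbT ?vi.
  have h2 : #|X1| <= #|[set i : 'I_r | cr e (A :\: D i)]|.
    apply: subset_leq_card; apply/subsetP => i; rewrite !inE => /andP[vhD vloD].
    by apply: crD; [exists vlo | exists vhi].
  rewrite -/m; move: h1 h2; rewrite /X2 -/(ply vlo) -/m => h1 h2; clear -h1 h2; lia.
case S0: [forall i : 'I_r, ~~ meets e (Bp i)].
  by rewrite HX0 ?add0n //; move=> i; move/forallP: S0; apply.
case Sin: [exists i : 'I_r, e \subset Bp i].
  by case/existsP: Sin => i ei; rewrite (HX3 i ei) add0n.
move/negbT: S0; rewrite negb_forall => /existsP[i1]; rewrite negbK => ei1.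
have [v1 v1e v1B] : exists2 v, v \in e & v \in Bp i1 by apply/meetsP.
case S1: [exists i : 'I_r, (i != i1) && meets e (Bp i)].
  case/existsP: S1 => i2 /andP[i21 ei2].
  have [v2 v2e v2B] : exists2 v, v \in e & v \in Bp i2 by apply/meetsP.
  have crall (l : 'I_r) : meets e (D l) -> cr e (A :\: D l).
    move=> /meetsP[w we wD]; apply: crD; last by exists w.
    case: (eqVneq l i1) => [li1|li1].
      exists v2 => //; apply: (Bp_notin (ltn_ord l) _ v2B).
      by rewrite li1 eq_sym.
    by exists v1 => //; apply: (Bp_notin (ltn_ord l) _ v1B).
  set K := [set l : 'I_r | meets e (D l)].
  have hK : #|K| <= \sum_(i < r) cr e (A :\: D i).
    rewrite sum_card; apply: subset_leq_card; apply/subsetP => l; rewrite !inE; exact: crall.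
  have KM : M <= #|K|.
    apply: subset_leq_card; apply/subsetP => l; rewrite !inE => vl.
    by apply/meetsP; exists vhi.
  have K2 : 2 <= #|K|.
    apply/card_gt1P; exists i1, i2; rewrite !inE; split => //; last by rewrite eq_sym.
      by apply/meetsP; exists v1 => //; apply: (subsetP (Bp_sub i1)).
    by apply/meetsP; exists v2 => //; apply: (subsetP (Bp_sub i2)).
  clear -hK KM K2 SumT2 HX2; lia.
have X1 : Xs <= 1.
  apply: (HX1 i1) => i ii1; apply: contraFN S1 => ei.
  by apply/existsP; exists i; rewrite ii1 ei.
have [u ue uB] : exists2 u, u \in e & u \notin Bp i1.
  apply/subsetPn; apply: contraFN Sin => H; by apply/existsP; exists i1.
case: (leqP 2 M) => M2.
  set K := [set l : 'I_r | vhi \in D l] :\ i1.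
  have hK : #|K| <= \sum_(i < r) cr e (A :\: D i).
    rewrite sum_card; apply: subset_leq_card; apply/subsetP => l; rewrite !inE => /andP[li1 vl].
    apply: crD; last by exists vhi.
    by exists v1 => //; apply: (Bp_notin (ltn_ord l) li1 v1B).
  have KM : M - 1 <= #|K|.
    have := cardsD1 i1 [set l : 'I_r | vhi \in D l]; rewrite -/K -/(ply vhi) -/M.
    case: (i1 \in _) => /= H; clear -H; lia.
  clear -hK KM X1 SumT2 M2; lia.
have cr1 : cr e (A :\: D i1).
  apply: crD; last by exists v1 => //; apply: (subsetP (Bp_sub i1)).
  exists u => //; apply/negP => uD.
  have := ply_ge2 (ltn_ord i1) uD uB; have := vhimax u ue; rewrite -/M => H1 H2; clear -H1 H2 M2; lia.
have h1 : 1 <= \sum_(i < r) cr e (A :\: D i).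
  rewrite sum_card card_gt0; apply/set0Pn; exists i1; by rewrite inE.
move: SumT2; rewrite (_ : M - 2 = 0); last by clear -M2; lia.
move=> SumT2; clear -SumT2 h1 X1; lia.
Qed.

End PE.

Section MkQ.
Variable V : finType.
Variables (j : nat) (F : nat -> {set V}).
Definition mkQ (i : 'I_j.+1) : {set V} := if i < j then F i else ~: \bigcup_(l < j) F l.
Hypothesis Fdisj : forall l l', l < j -> l' < j -> l != l' -> [disjoint F l & F l'].

Lemma F_sub_U l : l < j -> F l \subset \bigcup_(l' < j) F l'.
Proof. by move=> lj; apply: (bigcup_sup (Ordinal lj)). Qed.

Lemma mkQ_disj (i i' : 'I_j.+1) : i != i' -> [disjoint mkQ i & mkQ i'].
Proof.
move=> ii'; rewrite /mkQ; case: ifP => ij; case: ifP => i'j.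
- by apply: Fdisj.
- by rewrite disjoints_subset setCK; apply: F_sub_U.
- by rewrite disjoint_sym disjoints_subset setCK; apply: F_sub_U.
- exfalso; move: ii' ij i'j; rewrite -val_eqE /=.
  have := ltn_ord i; have := ltn_ord i'; lia.
Qed.

Lemma mkQ_part (R : {set V}) (x0 : V) :
  (forall l, l < j -> F l != set0) -> (forall l, l < j -> F l \subset R) -> x0 \notin R ->
  is_kpartition mkQ.
Proof.
move=> Fn FR x0R; split; [|split].
- move=> i; rewrite /mkQ; case: ifP => ij; first exact: Fn.
  apply/set0Pn; exists x0; rewrite inE; apply/bigcupP => [[l _ xl]].
  by move: x0R; rewrite (subsetP (FR _ (ltn_ord l)) _ xl).
- by move=> i i'; apply: mkQ_disj.
- apply/setP => v; rewrite inE; apply/bigcupP.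
  case: (boolP (v \in \bigcup_(l < j) F l)) => [/bigcupP[l _ vl] | vn].
    by exists (widen_ord (leqnSn j) l) => //; rewrite /mkQ /= ltn_ord.
  by exists ord_max => //; rewrite /mkQ /= ltnn inE.
Qed.

Lemma mkQ_cross (e : {set V}) : 2 <= #|[set i | e :&: mkQ i != set0]| ->
  exists l, [/\ l < j, meets e (F l) & ~~ (e \subset F l)].
Proof.
case/card_gt1P => i1 [i2 [H1 H2 i12]]; rewrite !inE in H1 H2.
have key (a b : 'I_j.+1) : a < j -> a != b -> e :&: mkQ a != set0 -> e :&: mkQ b != set0 ->
    exists l, [/\ l < j, meets e (F l) & ~~ (e \subset F l)].
  move=> aj ab Ha Hb; exists a; split => //; first by move: Ha; rewrite /mkQ aj.
  case/set0Pn: Hb => w; rewrite inE => /andP[we wb].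
  apply/subsetPn; exists w => //.
  have := mkQ_disj ab; rewrite disjoint_sym disjoints_subset => /subsetP/(_ w wb).
  by rewrite /mkQ aj inE.
case: (ltnP i1 j) => i1j; first exact: key i1j i12 H1 H2.
case: (ltnP i2 j) => i2j; first by apply: key i2j _ H2 H1; rewrite eq_sym.
exfalso; move: i12; rewrite -val_eqE /=; have := ltn_ord i1; have := ltn_ord i2; lia.
Qed.

End MkQ.

Section Hit.
Variables (V : finType) (E : seq {set V}).
Variables (j : nat) (A R : {set V}) (x0 : V) (b : nat).
Hypotheses (RA : R \subset A) (x0R : x0 \notin R) (bA : b <= dcut E A) (j1 : 0 < j).

Definition famD (D : {set V}) := [&& D != set0, D \subset R & dcut E (A :\: D) <= b].

Lemma hitting :
  (exists H : {set V}, [/\ H \subset R, #|H| <= (j + j).-1 & forall D, famD D -> D :&: H != set0])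
  \/ (exists Q : 'I_j.+1 -> {set V},
        [/\ is_kpartition Q, kcost E Q <= b & forall i : 'I_j.+1, i < j -> Q i \subset R]).
Proof.
pose hits (H : {set V}) := (H \subset R) && [forall D, famD D ==> (D :&: H != set0)].
have hR : hits R.
  rewrite /hits subxx /=; apply/forallP => D; apply/implyP => /and3P[Dn DR _].
  by rewrite (setIidPl DR).
case: (@arg_minnP _ R hits (fun H => #|H|) hR) => H0 hH0 minH0.
case/andP: (hH0) => H0R /forallP hitH0.
case: (leqP #|H0| (j + j).-1) => smallH.
  left; exists H0; split => // D fD; exact: (implyP (hitH0 D) fD).
right.
set r := j + j.
have rH : r <= #|H0| by rewrite /r; clear -smallH j1; lia.
have witE h : h \in H0 -> exists D, [&& famD D, D :&: (H0 :\ h) == set0 & h \in D].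
  move=> hH.
  have nh : ~~ hits (H0 :\ h).
    apply/negP => /minH0; rewrite (cardsD1 h H0) hH => H; clear -H; lia.
  move: nh; rewrite /hits (subset_trans (subD1set H0 h) H0R) /= negb_forall => /existsP[D].
  rewrite negb_imply negbK => /andP[fD DH].
  exists D; rewrite fD DH /=.
  have := implyP (hitH0 D) fD; case/set0Pn => v; rewrite inE => /andP[vD vH].
  case: (eqVneq v h) => [<- //|vh].
  by move/eqP/setP: DH => /(_ v); rewrite !inE vD vH vh.
pose wit h := if [pick D | famD D && (D :&: (H0 :\ h) == set0) && (h \in D)] is Some D then D else set0.
have witP h : h \in H0 -> [&& famD (wit h), wit h :&: (H0 :\ h) == set0 & h \in wit h].
  move=> hH; rewrite /wit; case: pickP => [D /andP[/andP[-> ->] ->] //|none].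
  by case: (witE h hH) => D H; move: (none D); rewrite -andbA H.
pose hs n := nth x0 (enum H0) n.
have hsH n : n < #|H0| -> hs n \in H0.
  by move=> nH; rewrite -mem_enum /hs mem_nth // -cardE.
have hs_inj n n' : n < #|H0| -> n' < #|H0| -> hs n = hs n' -> n = n'.
  move=> nH n'H; rewrite /hs => /eqP; rewrite nth_uniq ?enum_uniq -?cardE //; by move/eqP.
pose D n := wit (hs n).
have Dfam n : n < r -> famD (D n).
  by move=> nr; case/and3P: (witP _ (hsH n (leq_trans nr rH))).
have hsD n : n < r -> hs n \in D n.
  by move=> nr; case/and3P: (witP _ (hsH n (leq_trans nr rH))).
have hsnD n l : n < r -> l < r -> l != n -> hs l \notin D n.
  move=> nr lr ln; case/and3P: (witP _ (hsH n (leq_trans nr rH))) => _ /eqP/setP/(_ (hs l)) H _.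
  rewrite !inE (hsH l (leq_trans lr rH)) andbT in H.
  apply/negP => hD; have hD' : hs l \in wit (hs n) := hD.
  move: H; rewrite hD' /= => /negbFE/eqP/hs_inj.
  have lH := leq_trans lr rH; have nH := leq_trans nr rH.
  by move/(_ lH nH) => eq; rewrite eq eqxx in ln.
have DR n : n < r -> D n \subset R by move=> nr; case/and3P: (Dfam n nr).
have DA n : n < r -> D n \subset A by move=> nr; apply: subset_trans (DR n nr) RA.
have r2 : 1 < r by rewrite /r; clear -j1; lia.
have hsB n : n < r -> hs n \in Bp r D n.
  move=> nr; rewrite inE hsD // andbT; apply/bigcupP => [[l ln hl]].
  have := hsnD l n (ltn_ord l) nr; rewrite eq_sym ln => /(_ isT); by rewrite hl.
have Bdisj n n' : n < r -> n' < r -> n != n' -> [disjoint Bp r D n & Bp r D n'].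
  move=> nr n'r nn'; rewrite disjoints_subset; apply/subsetP => v vB; rewrite inE.
  exact: Bp_disj vB.
have BR n : n < r -> Bp r D n \subset R.
  by move=> nr; apply: subset_trans (Bp_sub r D n) (DR n nr).
pose F o l := Bp r D (l + o).
have Fdisj o : o + j <= r -> forall l l', l < j -> l' < j -> l != l' -> [disjoint F o l & F o l'].
  move=> ojr l l' lj l'j ll'; apply: Bdisj; rewrite ?eqn_add2r //; clear -ojr lj l'j; lia.
have Fpart o : o + j <= r -> is_kpartition (mkQ (j:=j) (F o)).
  move=> ojr; apply: (mkQ_part (Fdisj o ojr) (R:=R) (x0:=x0)) => // l lj.
    by apply/set0Pn; exists (hs (l + o)); apply: hsB; clear -ojr lj; lia.
  by apply: BR; clear -ojr lj; lia.
pose X o e := 1 < #|[set i | e :&: mkQ (j:=j) (F o) i != set0]|.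
have Xcross o e : o + j <= r -> X o e ->
    exists l, [/\ l < j, meets e (Bp r D (l + o)) & ~~ (e \subset Bp r D (l + o))].
  by move=> ojr; apply: (mkQ_cross (Fdisj o ojr)).
have j0r : 0 + j <= r by rewrite /r; clear; lia.
have jjr : j + j <= r by [].
have PEe e : X 0 e + X j e + \sum_(3 <= t < r.+1) cr e (A :\: Lv r D t)
    <= \sum_(i < r) cr e (A :\: D i).
  apply: (PE DA r2).
  - by rewrite -[2]/(1 + 1); apply: leq_add; apply: leq_b1.
  - move=> H.
    have nX o : o + j <= r -> X o e = false.
      move=> ojr; apply/negP => /(Xcross o e ojr) [l [lj m _]].
      have p : l + o < r by clear -lj ojr; lia.
      by move: (H (Ordinal p)) => /=; rewrite m.
    by rewrite (nX 0 j0r) (nX j jjr).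
  - move=> i0 H; case X0e: (X 0 e); case Xje: (X j e) => //.
    case: (Xcross 0 e j0r X0e) => l1 [l1j m1 _].
    case: (Xcross j e jjr Xje) => l2 [l2j m2 _].
    have l1r : l1 + 0 < r by clear -l1j j0r; lia.
    have l2r : l2 + j < r by rewrite /r ltn_add2r.
    have e1 : Ordinal l1r = i0 by apply/eqP; apply: contraLR m1 => /H.
    have e2 : Ordinal l2r = i0 by apply/eqP; apply: contraLR m2 => /H.
    have : l1 + 0 = l2 + j by rewrite -[l1 + 0]/(nat_of_ord (Ordinal l1r)) e1 -e2.
    clear -l1j; lia.
  - move=> i ei.
    have nX o : o + j <= r -> X o e = false.
      move=> ojr; apply/negP => /(Xcross o e ojr) [l [lj /meetsP[w we wB] nsub]].
      have lor : l + o < r by clear -lj ojr; lia.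
      case: (eqVneq (nat_of_ord i) (l + o)) => [eq|neq].
        by move: nsub; rewrite -eq ei.
      by move: (Bp_disj (ltn_ord i) lor neq (subsetP ei w we)); rewrite wB.
    by rewrite (nX 0 j0r) (nX j jjr).
have dcut_sum (X0 : {set V}) : dcut E X0 = \sum_(e <- E) cr e X0 by rewrite /dcut count_sum.
have KPI : kcost E (mkQ (j:=j) (F 0)) + kcost E (mkQ (j:=j) (F j))
    + \sum_(3 <= t < r.+1) dcut E (A :\: Lv r D t) <= \sum_(i < r) dcut E (A :\: D i).
  have e1 : \sum_(3 <= t < r.+1) dcut E (A :\: Lv r D t)
      = \sum_(3 <= t < r.+1) \sum_(e <- E) cr e (A :\: Lv r D t).
    by apply: eq_bigr => t _; apply: dcut_sum.
  have e2 : \sum_(i < r) dcut E (A :\: D i) = \sum_(i < r) \sum_(e <- E) cr e (A :\: D i).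
    by apply: eq_bigr => i _; apply: dcut_sum.
  rewrite e1 e2 /kcost !count_sum.
  rewrite exchange_big [X in _ <= X]exchange_big.
  rewrite -!big_split /=; apply: leq_sum => e _; exact: PEe.
have sumD : \sum_(i < r) dcut E (A :\: D i) <= r * b.
  apply: (@leq_trans (\sum_(i < r) b)); last by rewrite sum_nat_const card_ord.
  by apply: leq_sum => i _; case/and3P: (Dfam i (ltn_ord i)).
have LvH t : 1 < t -> Lv r D t :&: H0 = set0.
  move=> t1; apply/setP => v; rewrite !inE; apply/negP => /andP[vL vH].
  have /card_gt1P[i1 [i2 []]] : 1 < ply r D v by apply: leq_trans vL.
  rewrite !inE => v1 v2 i12.
  have vh (i : 'I_r) : v \in D i -> v = hs i.
    move=> vi; case/and3P: (witP _ (hsH i (leq_trans (ltn_ord i) rH))) => _ /eqP/setP/(_ v) + _.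
    rewrite !inE vH andbT.
    have vi' : v \in wit (hs i) := vi.
    by rewrite vi' /= => /negbFE/eqP.
  have := vh _ v1; rewrite (vh _ v2) => /hs_inj.
  rewrite !(leq_trans (ltn_ord _) rH) => /(_ isT isT) /val_inj eq.
  by rewrite eq eqxx in i12.
have LvR t : 0 < t -> Lv r D t \subset R.
  move=> t0; apply/subsetP => v; rewrite inE => vt.
  have /set0Pn[i] : [set i : 'I_r | v \in D i] != set0 by rewrite -card_gt0; apply: leq_trans vt.
  by rewrite inE => vi; apply: (subsetP (DR i (ltn_ord i))).
have sumL : (r - 2) * b <= \sum_(3 <= t < r.+1) dcut E (A :\: Lv r D t).
  rewrite -[r - 2]/(r.+1 - 3) -sum_nat_const_nat; apply: leq_sum_range => t /andP[t3 _].
  case: (eqVneq (Lv r D t) set0) => [->|Ln]; first by rewrite setD0.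
  have : ~~ famD (Lv r D t).
    apply/negP => fL; have := implyP (hitH0 _) fL.
    by rewrite LvH ?eqxx //; apply: (leq_trans _ t3).
  rewrite /famD Ln (LvR t) ?(ltn_trans _ t3) //= -ltnNge; exact: ltnW.
have : kcost E (mkQ (j:=j) (F 0)) + kcost E (mkQ (j:=j) (F j)) <= b + b.
  have rb : r * b = (r - 2) * b + 2 * b by rewrite -mulnDl subnK.
  move: KPI sumD sumL; rewrite rb.
  set s1 := \sum_(3 <= t < r.+1) _; set s2 := \sum_(i < r) _; set z := (r - 2) * b.
  move=> KPI sumD sumL; clear -KPI sumD sumL; lia.
have Qsub o : o + j <= r -> forall i : 'I_j.+1, i < j -> mkQ (j:=j) (F o) i \subset R.
  move=> ojr i ij; rewrite /mkQ ij; apply: BR; clear -ij ojr; lia.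
case: (leqP (kcost E (mkQ (j:=j) (F 0))) b) => k0.
  by exists (mkQ (j:=j) (F 0)); split => //; [exact: Fpart | exact: Qsub].
move=> H; exists (mkQ (j:=j) (F j)); split; [exact: Fpart | clear -k0 H; lia | exact: Qsub].
Qed.

End Hit.

Section Main.
Variables (V : finType) (E : seq {set V}).

Lemma dcut_sumE (X : {set V}) : dcut E X = \sum_(e <- E) cr e X.
Proof. by rewrite /dcut count_sum. Qed.

Lemma dcutC (X : {set V}) : dcut E (~: X) = dcut E X.
Proof. by rewrite !dcut_sumE; apply: eq_bigr => e _; rewrite crC. Qed.

Lemma dcut_sub (X Y : {set V}) : dcut E (X :&: Y) + dcut E (X :|: Y) <= dcut E X + dcut E Y.
Proof. rewrite !dcut_sumE -!big_split; apply: leq_sum => e _; exact: cr_sub. Qed.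

Lemma kcost_ge (k h : nat) (P : 'I_k -> {set V}) : is_kpartition P ->
  dcut E (\bigcup_(i < k | i < h) P i) <= kcost E P.
Proof.
move=> [_ [Pd Pc]]; rewrite /dcut /kcost; apply: sub_count => e /andP[].
case/set0Pn => v; rewrite inE => /andP[ve /bigcupP[i ih vi]].
case/set0Pn => w; rewrite !inE => /andP[we wU].
have : w \in [set: V] by [].
rewrite -Pc => /bigcupP[i' _ wi'].
apply/card_gt1P; exists i, i'; rewrite !inE; split.
- by apply/set0Pn; exists v; rewrite inE ve vi.
- by apply/set0Pn; exists w; rewrite inE we wi'.
- apply: contra wU => /eqP ii'; apply/bigcupP; exists i => //; by rewrite ii'.
Qed.

End Main.

Theorem theorem5p3 (V : finType) (E : seq {set V}) (k : nat) (U : {set V}) :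
  2 <= k ->
  minimal_balanced_split E k U ->
  forall u0 : V, u0 \in U ->
  exists S T : {set V},
    [/\ S \subset U :\ u0, T \subset ~: U,
        #|S| <= 2 * k - 3, #|T| <= 2 * k - 2 &
        source_minimal_min_terminal_cut E (u0 |: S) T U].
Proof.
case: k => [//|j] k2 [[P [[Pp minP] UP]] nmin] u0 u0U.
have j1 : 0 < j by [].
set c := dcut E U.
have cP : c <= kcost E P by rewrite /c UP; apply: kcost_ge.
have hj : j.+1./2 <= j by rewrite leq_half_double; clear -j1; lia.
have [t0 t0P] : exists t0, t0 \in P ord_max.
  by case: Pp => /(_ ord_max) /set0Pn.
have t0U : t0 \notin U.
  rewrite UP; apply/bigcupP => [[i ih ti]].
  have ii : i != ord_max.
    by rewrite -val_eqE /= neq_ltn (leq_trans ih hj).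
  case: Pp => _ [/(_ _ _ ii) + _]; rewrite disjoints_subset => /subsetP/(_ t0 ti).
  by rewrite inE t0P.
have [[S [SR Scard Shit]] | [Q [Qp Qc Qsub]]] :=
  @hitting V E j U (U :\ u0) u0 c (subD1set U u0) (negbT (setD11 u0 U)) (leqnn c) j1; last first.
  exfalso; apply: nmin.
  exists (\bigcup_(i < j.+1 | i < j.+1./2) Q i); split.
    exists Q; split => //; split => // Q' Q'p.
    by apply: leq_trans Qc (leq_trans cP (minP Q' Q'p)).
  apply: (@sub_proper_trans _ _ (U :\ u0)); last exact: properD1.
  apply/bigcupsP => i ih; apply: Qsub; exact: leq_trans ih hj.
have [T' [T'R T'card T'hit]] : exists T' : {set V}, [/\ T' \subset ~: U :\ t0, #|T'| <= (j + j).-1 &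
    forall C, C != set0 -> C \subset ~: U :\ t0 -> dcut E (~: U :\: C) < c -> C :&: T' != set0].
  case: (posnP c) => c0.
    by exists set0; split; rewrite ?sub0set ?cards0 // => C _ _; rewrite c0.
  have bA : c.-1 <= dcut E (~: U) by rewrite dcutC leq_pred.
  have t0R : t0 \notin ~: U :\ t0 by rewrite setD11.
  have [[T' [T'R T'card T'hit]] | [Q [Qp Qc Qsub]]] :=
    @hitting V E j (~: U) (~: U :\ t0) t0 c.-1 (subD1set _ t0) t0R bA j1.
    exists T'; split => // C Cn CR Cd; apply: T'hit; rewrite /famD Cn CR /=.
    by clear -Cd c0; lia.
  exfalso; have := leq_trans cP (minP Q Qp); clear -Qc c0; lia.
exists S, (t0 |: T'); split => //.
- rewrite subUset sub1set inE t0U /=; apply: subset_trans T'R _; exact: subD1set.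
- by clear -Scard; lia.
- rewrite cardsU1; have := leq_b1 (t0 \notin T'); clear -T'card j1; lia.
have KS (Y : {set V}) : u0 |: S \subset Y -> dcut E (Y :&: U) <= c -> U \subset Y.
  move=> SY YUc; apply/negPn/negP => nUY.
  have Dn : U :\: Y != set0 by rewrite setD_eq0.
  have DR : U :\: Y \subset U :\ u0.
    apply/subsetP => v; rewrite !inE => /andP[vY vU]; rewrite vU andbT.
    by apply: contraNneq vY => ->; apply: (subsetP SY); rewrite setU11.
  have : (U :\: Y) :&: S != set0.
    apply: Shit; rewrite /famD Dn DR /=.
    by rewrite setDDr setDv set0U setIC.
  case/set0Pn => s; rewrite !inE => /andP[/andP[sY _] sS].
  by move: sY; rewrite (subsetP SY) // inE sS orbT.
have KT (Y : {set V}) : Y \subset ~: (t0 |: T') -> dcut E (Y :|: U) < c -> Y \subset U.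
  move=> YT YUc; apply/negPn/negP => nYU.
  have Cn : Y :\: U != set0 by rewrite setD_eq0.
  have CR : Y :\: U \subset ~: U :\ t0.
    apply/subsetP => v; rewrite !inE => /andP[vU vY]; rewrite vU andbT.
    move: (subsetP YT v vY); rewrite !inE negb_or => /andP[+ _]; by rewrite eq_sym.
  have : (Y :\: U) :&: T' != set0.
    apply: T'hit => //.
    have -> : ~: U :\: (Y :\: U) = ~: (Y :|: U).
      apply/setP => v; rewrite !inE; by case: (v \in U); case: (v \in Y).
    by rewrite dcutC.
  case/set0Pn => t; rewrite !inE => /andP[/andP[_ tY] tT].
  by move: (subsetP YT t tY); rewrite !inE tT orbT.
have Uterm : terminal_cut (u0 |: S) (t0 |: T') U.
  split; first by apply/set0Pn; exists u0.
  split; first by apply/negP => /eqP UT; move: t0U; rewrite UT inE.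
  split; first by rewrite subUset sub1set u0U /=; apply: subset_trans SR (subD1set U u0).
  apply/subsetP => v vU; rewrite !inE negb_or; apply/andP; split.
    by apply: contraTneq vU => ->.
  apply: contraTN vU => vT; have := subsetP T'R v vT; rewrite !inE => /andP[_ ->].
  by [].
have Umin : forall Y, terminal_cut (u0 |: S) (t0 |: T') Y -> dcut E U <= dcut E Y.
  move=> Y [_ [_ [SY YT]]].
  have sub := dcut_sub E Y U.
  have h1 : c <= dcut E (Y :&: U).
    rewrite leqNgt; apply/negP => lt.
    have UY := KS Y SY (ltnW lt).
    by move: lt; rewrite (setIidPr UY) ltnn.
  have h2 : c <= dcut E (Y :|: U).
    rewrite leqNgt; apply/negP => lt.
    have YU := KT Y YT lt.
    by move: lt; rewrite (setUidPr YU) ltnn.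
  rewrite -/c; clear -sub h1 h2; lia.
split; first by split.
move=> Y [[_ [_ [SY _]]] Ymin] YU.
have YUs := proper_sub YU.
have UY : U \subset Y.
  apply: KS SY _; rewrite (setIidPl YUs); exact: Ymin.
by move: YU; rewrite properE UY andbF.
Qed.
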